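(* Let $(\mathcal G,\mathcal F)$ be a $B_n$-generalized almost pseudo-Hermitian structure on an odd exact Courant algebroid $E$ over a manifold $M$ of dimension $n$, let $U:=\ker\mathcal F$ and let $u_0\in\Gamma(U)$ satisfy $\langle u_0,u_0\rangle=(-1)^n$. Then: (i) $\mathcal G^{\mathrm{end}}(u_0)=(-1)^nu_0$; i.e. $u_0$ is a section of $E_+$ if $n$ is even and of $E_-$ if $n$ is odd; (ii) for all $u,v\in E$, $\mathcal G(\mathcal Fu,\mathcal Fv)=\mathcal G(u,v)-\langle u,u_0\rangle\langle v,u_0\rangle$ and $\mathcal G(\mathcal Fu,v)=-\mathcal G(u,\mathcal Fv)$, where $\mathcal G(u,v):=\langle\mathcal G^{\mathrm{end}}u,v\rangle$.
   Context: An odd exact Courant algebroid over an $n$-manifold $M$ is a Courant algebroid (vector bundle $E$ with nondegenerate symmetric scalar product $\langle\cdot,\cdot\rangle$, Dorfman bracket and anchor $\pi:E\to TM$) isomorphic to $TM\oplus T^*M\oplus\mathbb R$ with scalar product $\langle X+\xi+\lambda,Y+\eta+\mu\rangle=\tfrac12(\eta(X)+\xi(Y))+\lambda\mu$, anchor the projection and Dorfman bracket $[X+\xi+\lambda,Y+\eta+\mu]=\mathcal L_XY+\mathcal L_X\eta-i_Yd\xi+2\mu\,d\lambda+i_Xi_YH-2(\mu\,i_XF-\lambda\,i_YF)+X(\mu)-Y(\lambda)+F(X,Y)$ for some closed $2$-form $F$ and $3$-form $H$ with $dH=-F\wedge F$. A generalized metric is a rank $n$ subbundle $E_-\subset E$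 on which $\langle\cdot,\cdot\rangle$ is nondegenerate and with $\pi|_{E_-}$ an isomorphism onto $TM$; $E_+:=E_-^\perp$, $\mathcal G^{\mathrm{end}}=\pm\mathrm{Id}$ on $E_\pm$. A $B_n$-generalized almost complex structure is an endomorphism $\mathcal F$ whose $i$-eigenbundle $L\subset E\otimes\mathbb C$ is isotropic of rank $n$ with $L\cap\bar L=0$, whose $-i$-eigenbundle is $\bar L$ and which vanishes on the rank-one bundle $(L\oplus\bar L)^\perp$. A $B_n$-generalized almost pseudo-Hermitian structure is such a pair $(\mathcal G,\mathcal F)$ with $\mathcal G^{\mathrm{end}}\mathcal F=\mathcal F\mathcal G^{\mathrm{end}}$. *)

(* Defs.v *)
(* pointwise (fibrewise) linear algebra over a real closed field R *)
From HB Require Import structures.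
From mathcomp Require Import all_boot all_order all_algebra.
From mathcomp Require Import complex.
Set Implicit Arguments. Unset Strict Implicit. Unset Printing Implicit Defensive.
Import Order.TTheory GRing.Theory Num.Theory.
Local Open Scope ring_scope.

(* Fibre of the odd exact Courant algebroid: E_x = T_xM (+) T_x^*M (+) R,
   modelled as row vectors of length n + n + 1:
   indices 0..n-1 : X (tangent part), n..2n-1 : xi (cotangent part, dual basis),
   index 2n : lambda. Endomorphisms act on the right: v |-> v *m A. *)

Definition odd_dim (n : nat) := (n + n).+1.

(* Gram matrix of <X+xi+l, Y+eta+m> = 1/2 (eta(X) + xi(Y)) + l m *)
Definition courant_gram (R : fieldType) (n : nat) : 'M[R]_(odd_dim n) :=
  \matrix_(i, j)
    (if ((i < n)%N && (val j == i + n)%N) || ((j < n)%N && (val i == j + n)%N)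
     then 2%:R^-1
     else if (val i == n + n)%N && (val j == n + n)%N then 1 else 0).

Definition cprod (R : fieldType) (n : nat) (u v : 'rV[R]_(odd_dim n)) : R :=
  (u *m courant_gram R n *m v^T) 0 0.

Definition anchor (R : fieldType) (n : nat) (v : 'rV[R]_(odd_dim n)) : 'rV[R]_n :=
  \row_(k < n) v 0 (inord k).

(* E_+ = E_-^perp, E_- being the row space of Em *)
Definition in_Eplus (R : fieldType) (n : nat) (Em : 'M[R]_(odd_dim n))
  (v : 'rV[R]_(odd_dim n)) : Prop :=
  forall w : 'rV[R]_(odd_dim n), (w <= Em)%MS -> cprod v w = 0.

Definition generalized_metric (R : fieldType) (n : nat)
  (Em : 'M[R]_(odd_dim n)) (Gend : 'M[R]_(odd_dim n)) : Prop :=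
  [/\ \rank Em = n,
      (forall v : 'rV[R]_(odd_dim n), (v <= Em)%MS -> (forall w : 'rV[R]_(odd_dim n), (w <= Em)%MS -> cprod v w = 0) -> v = 0),
      ((forall v : 'rV[R]_(odd_dim n), (v <= Em)%MS -> anchor v = 0 -> v = 0) /\
       (forall X : 'rV[R]_n, exists v, (v <= Em)%MS /\ anchor v = X)),
      (forall v : 'rV[R]_(odd_dim n), (v <= Em)%MS -> v *m Gend = - v) &
      (forall v, in_Eplus Em v -> v *m Gend = v)].

Definition cplx (R : rcfType) (x : R) : R[i] := Complex x 0.
Definition cprodC (R : rcfType) (n : nat) (u v : 'rV[R[i]]_(odd_dim n)) : R[i] :=
  (u *m map_mx (@cplx R) (courant_gram R n) *m v^T) 0 0.

Definition eigL (R : rcfType) (n : nat) (Fm : 'M[R]_(odd_dim n)) :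
  'M[R[i]]_(odd_dim n) := eigenspace (map_mx (@cplx R) Fm) (Complex 0 1).
Definition conjL (R : rcfType) (n : nat) (L : 'M[R[i]]_(odd_dim n)) :
  'M[R[i]]_(odd_dim n) := map_mx (@conjc R) L.

Definition Bn_gen_almost_complex (R : rcfType) (n : nat) (Fm : 'M[R]_(odd_dim n)) :
  Prop :=
  let L := eigL Fm in
  let Lb := conjL L in
  [/\ (forall v w : 'rV[R[i]]_(odd_dim n), (v <= L)%MS -> (w <= L)%MS -> cprodC v w = 0),
      \rank L = n,
      (L :&: Lb = 0)%MS,
      (eigenspace (map_mx (@cplx R) Fm) (Complex 0 (-1)) == Lb)%MS &
      (forall v : 'rV[R]_(odd_dim n),
         (forall w : 'rV[R[i]]_(odd_dim n), (w <= L + Lb)%MS -> cprodC (map_mx (@cplx R) v) w = 0) ->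
         v *m Fm = 0)].

Definition Bn_gen_almost_pseudo_hermitian (R : rcfType) (n : nat)
  (Em Gend Fm : 'M[R]_(odd_dim n)) : Prop :=
  [/\ generalized_metric Em Gend, Bn_gen_almost_complex Fm & Gend *m Fm = Fm *m Gend].

Definition Gform (R : fieldType) (n : nat) (Gend : 'M[R]_(odd_dim n))
  (u v : 'rV[R]_(odd_dim n)) : R := cprod (u *m Gend) v.

(* Main.v *)
Require Import Defs.
From HB Require Import structures.
From mathcomp Require Import all_boot all_order all_algebra.
From mathcomp Require Import complex.
From mathcomp Require Import ring lra zify.
Import Order.TTheory GRing.Theory Num.Theory.
Local Open Scope ring_scope.
Set Implicit Arguments. Unset Strict Implicit. Unset Printing Implicit Defensive.

Section Bform.
Variables (K : fieldType) (N : nat) (M : 'M[K]_N).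
Definition bf (u v : 'rV[K]_N) : K := (u *m M *m v^T) 0 0.
Lemma bfDl u1 u2 v : bf (u1 + u2) v = bf u1 v + bf u2 v.
Proof. by rewrite /bf !mulmxDl mxE. Qed.
Lemma bfDr u v1 v2 : bf u (v1 + v2) = bf u v1 + bf u v2.
Proof. by rewrite /bf linearD /= mulmxDr mxE. Qed.
Lemma bfZl a u v : bf (a *: u) v = a * bf u v.
Proof. by rewrite /bf -!scalemxAl mxE. Qed.
Lemma bfZr a u v : bf u (a *: v) = a * bf u v.
Proof. by rewrite /bf linearZ /= -scalemxAr mxE. Qed.
Lemma bfNl u v : bf (- u) v = - bf u v.
Proof. by rewrite -scaleN1r bfZl mulN1r. Qed.
Lemma bfNr u v : bf u (- v) = - bf u v.
Proof. by rewrite -scaleN1r bfZr mulN1r. Qed.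
Lemma bf0l v : bf 0 v = 0.
Proof. by rewrite /bf !mul0mx mxE. Qed.
Lemma bf0r v : bf v 0 = 0.
Proof. by rewrite /bf trmx0 mulmx0 mxE. Qed.
Lemma bf_sym : M^T = M -> forall u v, bf u v = bf v u.
Proof.
move=> sM u v; rewrite /bf.
transitivity ((u *m M *m v^T)^T 0 0); first by rewrite [RHS]mxE.
by rewrite !trmx_mul trmxK sM mulmxA.
Qed.
Lemma bf_perp (y : 'rV[K]_N) m (X : 'M[K]_(m, N)) w :
  y *m M *m X^T = 0 -> (w <= X)%MS -> bf y w = 0.
Proof.
move=> yX /submxP [D ->]; rewrite /bf trmx_mul mulmxA yX mul0mx mxE //.
Qed.
End Bform.

Section Real.
Variables (R : rcfType) (n : nat).
Local Notation N := (odd_dim n).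
Local Notation B := (courant_gram R n).

Lemma gram_sym : B^T = B.
Proof.
apply/matrixP => i j; rewrite !mxE.
by rewrite orbC; congr (if _ then _ else _); rewrite andbC.
Qed.

Lemma cprod_sym (u v : 'rV[R]_N) : cprod u v = cprod v u.
Proof. exact: (bf_sym gram_sym). Qed.

Variables (Em Gend : 'M[R]_N).
Hypothesis hG : generalized_metric Em Gend.

Definition Ep := kermx (B *m Em^T).

Lemma Ep_perp v : (v <= Ep)%MS -> in_Eplus Em v.
Proof.
move=> /sub_kermxP vE w wE.
by apply: (bf_perp (M := B) (X := Em)) => //; rewrite -mulmxA.
Qed.

Lemma EmEp0 : (Em :&: Ep)%MS = 0.
Proof.
case: hG => _ nd _ _ _.
apply/eqP/rowV0P => v; rewrite sub_capmx => /andP[vE vP].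
by apply: nd => // w wE; apply: Ep_perp.
Qed.

Lemma rank_sum : (\rank Em + \rank Ep)%N = N.
Proof.
case: hG => rE _ _ _ _.
have h1 := rank_leq_col (Em + Ep)%MS.
rewrite mxrank_disjoint_sum ?EmEp0 // in h1.
rewrite /Ep mxrank_ker in h1 *.
have h2 := mxrankM_maxr B Em^T.
rewrite mxrank_tr rE in h2.
rewrite rE; lia.
Qed.

Lemma rank_Ep : \rank Ep = n.+1.
Proof. case: hG => rE _ _ _ _; have := rank_sum; rewrite rE /odd_dim; lia. Qed.

Lemma decomp (u : 'rV[R]_N) : exists a b, [/\ (a <= Em)%MS, (b <= Ep)%MS & u = a + b].
Proof.
have full : row_full (Em + Ep)%MS.
  by rewrite /row_full mxrank_disjoint_sum ?EmEp0 // rank_sum.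
have := submx_full u full.
case/sub_addsmxP => -[x y] /= ->.
by exists (x *m Em), (y *m Ep); split => //; apply: submxMl.
Qed.
Lemma G_Em (a : 'rV[R]_N) : (a <= Em)%MS -> a *m Gend = - a.
Proof. by case: hG => _ _ _ h _; apply: h. Qed.

Lemma G_Ep (b : 'rV[R]_N) : (b <= Ep)%MS -> b *m Gend = b.
Proof. by case: hG => _ _ _ _ h bP; apply: h; apply: Ep_perp. Qed.

Lemma G_sym (u v : 'rV[R]_N) : cprod (u *m Gend) v = cprod u (v *m Gend).
Proof.
have [a [b [aE bP ->]]] := decomp u.
have [a' [b' [aE' bP' ->]]] := decomp v.
rewrite !mulmxDl G_Em // G_Ep // G_Em // G_Ep //.
rewrite /cprod -/(bf B _ _) -/(bf B (a + b) _).
rewrite !(bfDl, bfDr, bfNl, bfNr).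
have e1 : bf B b a' = 0 by apply: (Ep_perp bP).
have e2 : bf B a b' = 0 by rewrite (bf_sym gram_sym); apply: (Ep_perp bP').
rewrite e1 e2; ring.
Qed.

Lemma two_eq0 (v : 'rV[R]_N) : v + v = 0 -> v = 0.
Proof.
move=> h; have : (2%:R : R) *: v = 0 by rewrite scaler_nat mulr2n.
by move/eqP; rewrite scaler_eq0 pnatr_eq0 /= => /eqP.
Qed.

Lemma G_neg (u : 'rV[R]_N) : u *m Gend = - u -> (u <= Em)%MS.
Proof.
have [a [b [aE bP ->]]] := decomp u.
rewrite mulmxDl G_Em // G_Ep // => h.
rewrite opprD in h; move/addrI: h => h.
have : b + b = 0 by rewrite {1}h addNr.
by move/two_eq0 => ->; rewrite addr0.
Qed.

Lemma G_pos (u : 'rV[R]_N) : u *m Gend = u -> (u <= Ep)%MS.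
Proof.
have [a [b [aE bP ->]]] := decomp u.
rewrite mulmxDl G_Em // G_Ep // => h.
move/addIr: h => h.
have : a + a = 0 by rewrite -{1}h addNr.
by move/two_eq0 => ->; rewrite add0r.
Qed.

Lemma GG (u : 'rV[R]_N) : u *m Gend *m Gend = u.
Proof.
have [a [b [aE bP ->]]] := decomp u.
by rewrite mulmxDl (G_Em aE) (G_Ep bP) mulmxDl mulNmx (G_Em aE) (G_Ep bP) opprK.
Qed.

End Real.

Lemma even_rank (R : realFieldType) m (S F : 'M[R]_m) :
  (S *m F <= S)%MS -> (forall v : 'rV_m, (v <= S)%MS -> v *m F *m F = - v) ->
  ~~ odd (\rank S).
Proof.
move=> SF hF.
set P := row_base S.
have PS : (P :=: S)%MS := eq_row_base S.
have PleS : (P <= S)%MS by rewrite PS.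
have rfP : row_free P := row_base_free S.
clearbody P.
have PF : (P *m F <= P)%MS.
  apply: (submx_trans (submxMr F PleS)); apply: (submx_trans SF).
  by rewrite PS.
set A := P *m F *m pinvmx P.
have AP : A *m P = P *m F := mulmxKpV PF.
have PFF : P *m F *m F = - P.
  apply/row_matrixP => i; rewrite !row_mul raddfN /=; apply: hF.
  exact: submx_trans (row_sub i P) PleS.
have AA : A *m A = - 1%:M.
  apply: (row_free_inj rfP) => /=.
  by rewrite -mulmxA AP mulmxA AP PFF mulNmx mul1mx.
have := congr1 determinant AA.
rewrite det_mulmx -scaleN1r detZ det1 mulr1 -signr_odd.
case: (odd _) => //= h.
have := sqr_ge0 (\det A); rewrite expr2 h; lra.
Qed.

HB.instance Definition _ (R : rcfType) := GRing.RMorphism.copy (@cplx R) (real_complex R).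

Section Cplx.
Variables (R : rcfType) (n : nat).
Local Notation N := (odd_dim n).
Local Notation B := (courant_gram R n).
Local Notation C := (R[i]).
Local Notation cx := (@cplx R).
Local Notation Bc := (map_mx cx B).

Lemma cprodC_bf (u v : 'rV[C]_N) : cprodC u v = bf Bc u v.
Proof. by []. Qed.

Lemma cprodC_rc (u v : 'rV[R]_N) : cprodC (map_mx cx u) (map_mx cx v) = cx (cprod u v).
Proof. by rewrite /cprodC /cprod map_trmx -!map_mxM mxE. Qed.

Lemma Bc_sym : Bc^T = Bc.
Proof. by rewrite map_trmx gram_sym. Qed.

Lemma conj_cx (m k : nat) (A : 'M[R]_(m, k)) : map_mx (@conjc R) (map_mx cx A) = map_mx cx A.
Proof. by apply/matrixP => i j; rewrite !mxE /cplx conjc_real. Qed.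

Lemma conjcK_mx (m k : nat) (A : 'M[C]_(m, k)) : map_mx (@conjc R) (map_mx (@conjc R) A) = A.
Proof. by apply/matrixP => i j; rewrite !mxE conjcK. Qed.

Lemma reJ_mx p q (X : 'M[C]_(p, q)) :
  map_mx cx (map_mx (@complex.Re R) X) = 2^-1 *: (X + map_mx (@conjc R) X).
Proof.
apply/matrixP => i j; rewrite !mxE.
by rewrite /cplx -/(real_complex R _) ReJ_add mulrC.
Qed.

Lemma imJ_mx p q (X : 'M[C]_(p, q)) :
  map_mx cx (map_mx (@complex.Im R) X) = (2^-1 * 'i%C) *: (- X + map_mx (@conjc R) X).
Proof.
apply/matrixP => i j; rewrite !mxE.
rewrite /cplx -/(real_complex R _) ImJ_sub.
by rewrite addrC; ring.
Qed.

Lemma cE_mx p q (X : 'M[C]_(p, q)) :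
  X = map_mx cx (map_mx (@complex.Re R) X) + 'i%C *: map_mx cx (map_mx (@complex.Im R) X).
Proof.
apply/matrixP => i j; rewrite !mxE.
exact: complexE.
Qed.

Variables (Fm : 'M[R]_N) (u0 : 'rV[R]_N).
Hypothesis hF : Bn_gen_almost_complex Fm.
Hypothesis u0F : u0 *m Fm = 0.
Hypothesis c0 : cprod u0 u0 != 0.

Local Notation Fc := (map_mx cx Fm).
Local Notation L := (eigL Fm).
Local Notation Lb := (conjL (eigL Fm)).
Local Notation u0c := (map_mx cx u0).

Lemma eL (l : 'rV[C]_N) : (l <= L)%MS -> l *m Fc = 'i%C *: l.
Proof. by move/eigenspaceP. Qed.

Lemma eLb (m : 'rV[C]_N) : (m <= Lb)%MS -> m *m Fc = (- 'i%C) *: m.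
Proof.
case: hF => _ _ _ /eqmxP h _ mL.
have : (m <= eigenspace Fc (Complex 0 (-1)))%MS by rewrite h.
move/eigenspaceP => ->; congr (_ *: _).
by apply/eqP; rewrite eq_complex /= oppr0 !eqxx.
Qed.

Lemma isoL (v w : 'rV[C]_N) : (v <= L)%MS -> (w <= L)%MS -> cprodC v w = 0.
Proof. by case: hF => h _ _ _ _; apply: h. Qed.

Lemma conjL_sub (v : 'rV[C]_N) : (v <= Lb)%MS -> (map_mx (@conjc R) v <= L)%MS.
Proof.
move=> vL; rewrite -(map_submx (@conjc R)) conjcK_mx.
by [].
Qed.

Lemma isoLb (v w : 'rV[C]_N) : (v <= Lb)%MS -> (w <= Lb)%MS -> cprodC v w = 0.
Proof.
move=> /conjL_sub vL /conjL_sub wL.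
have := isoL vL wL.
rewrite /cprodC -conj_cx map_trmx -!map_mxM mxE => /eqP.
by rewrite conj_cx conjc_eq0 => /eqP.
Qed.


Lemma iC_neq0 : ('i%C : C) != 0.
Proof. by rewrite eq_complex /= oner_eq0 andbF. Qed.

Lemma disjL (y : 'rV[C]_N) : (y <= L + Lb)%MS -> y *m Fc = 0 -> y = 0.
Proof.
case/sub_addsmxP => -[x1 x2] /= ->.
have l1 : (x1 *m L <= L)%MS := submxMl _ _.
have l2 : (x2 *m Lb <= Lb)%MS := submxMl _ _.
move: (x1 *m L) (x2 *m Lb) l1 l2 => l m lL mL.
rewrite mulmxDl (eL lL) (eLb mL) scaleNr -scalerBr => /eqP.
rewrite scaler_eq0 (negbTE iC_neq0) /= subr_eq0 => /eqP lm.
have : (l <= L :&: Lb)%MS by rewrite sub_capmx lL lm mL.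
case: hF => _ _ -> _ _; rewrite submx0 => /eqP l0.
by rewrite -lm l0 addr0.
Qed.

Lemma u0_neq0 : u0 != 0.
Proof. by apply: contraNneq c0 => ->; rewrite /cprod -/(bf _ _ _) bf0l. Qed.

Lemma u0c_neq0 : u0c != 0.
Proof. by rewrite map_mx_eq0 u0_neq0. Qed.

Lemma u0cF : u0c *m Fc = 0.
Proof. by rewrite -map_mxM u0F map_mx0. Qed.

Lemma rankLLb : \rank (L + Lb)%MS = (n + n)%N.
Proof.
case: hF => _ rL LLb _ _.
by rewrite mxrank_disjoint_sum // mxrank_map rL.
Qed.

Lemma full_dec (x : 'rV[C]_N) : exists l m a,
  [/\ (l <= L)%MS, (m <= Lb)%MS & x = l + m + a *: u0c].
Proof.
have cap0 : ((L + Lb) :&: u0c)%MS = 0.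
  apply/eqP/rowV0P => v; rewrite sub_capmx => /andP[vLL /sub_rVP [a va]].
  apply: disjL => //; by rewrite va -scalemxAl u0cF scaler0.
have full : row_full ((L + Lb) + u0c)%MS.
  rewrite /row_full mxrank_disjoint_sum // rankLLb rank_rV u0c_neq0. by rewrite addn1.
have := submx_full x full.
case/sub_addsmxP => -[p q] /= ->.
have := submxMl p (L + Lb)%MS; case/sub_addsmxP => -[x1 x2] /= ->.
exists (x1 *m L), (x2 *m Lb), (q 0 0); split; try exact: submxMl.
by rewrite {1}(mx11_scalar q) mul_scalar_mx.
Qed.


Lemma perp_sum (y : 'rV[C]_N) :
  y *m Bc *m L^T = 0 -> y *m Bc *m Lb^T = 0 ->
  forall w, (w <= L + Lb)%MS -> cprodC y w = 0.
Proof.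
move=> yL yLb w /sub_addsmxP [[x1 x2] /= ->].
rewrite cprodC_bf bfDr (bf_perp yL (submxMl _ _)) (bf_perp yLb (submxMl _ _)).
by rewrite addr0.
Qed.

Lemma real_perp : exists2 v : 'rV[R]_N, v != 0 &
  forall w, (w <= L + Lb)%MS -> cprodC (map_mx cx v) w = 0.
Proof.
pose ReL := map_mx (@complex.Re R) L.
pose ImL := map_mx (@complex.Im R) L.
pose Mx := col_mx ReL ImL.
have hRe : map_mx cx ReL = 2^-1 *: (L + Lb) := reJ_mx L.
have hIm : map_mx cx ImL = (2^-1 * 'i%C) *: (- L + Lb) := imJ_mx L.
have hL : L = map_mx cx ReL + 'i%C *: map_mx cx ImL := cE_mx L.
have hLb : Lb = 2%:R *: map_mx cx ReL - L.
  by rewrite hRe scalerA mulfV ?pnatr_eq0 // scale1r addrC addKr.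
have subM : (map_mx cx Mx <= L + Lb)%MS.
  rewrite map_col_mx col_mx_sub hRe hIm.
  rewrite !scalemx_sub //; apply: addmx_sub_adds => //.
  by rewrite eqmx_opp.
have rM : (\rank Mx <= n + n)%N.
  by rewrite -rankLLb -(mxrank_map cx); apply: mxrankS.
pose Kr := kermx (B *m Mx^T).
have rK : (1 <= \rank Kr)%N.
  rewrite mxrank_ker.
  have := mxrankM_maxr B Mx^T; rewrite mxrank_tr.
  rewrite /odd_dim; move: rM; move: (\rank Mx) (\rank (B *m Mx^T)) => a b; lia.
have : Kr != 0 by apply: contraTneq rK => ->; rewrite mxrank0.
case/rowV0Pn => v /sub_kermxP vK v0.
exists v => //.
rewrite mulmxA /Mx tr_col_mx mul_mx_row -row_mx0 in vK.
case/eq_row_mx: vK => vRe vIm.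
have zRe : map_mx cx v *m Bc *m (map_mx cx ReL)^T = 0.
  by rewrite map_trmx -!map_mxM vRe map_mx0.
have zIm : map_mx cx v *m Bc *m (map_mx cx ImL)^T = 0.
  by rewrite map_trmx -!map_mxM vIm map_mx0.
have zL : map_mx cx v *m Bc *m L^T = 0.
  by rewrite {1}hL linearD linearZ /= mulmxDr -scalemxAr zRe zIm scaler0 addr0.
apply: perp_sum => //.
by rewrite hLb linearD linearZ linearN /= mulmxDr mulmxN -scalemxAr zRe zL scaler0 oppr0 addr0.
Qed.


Lemma u0c_perp (w : 'rV[C]_N) : (w <= L + Lb)%MS -> cprodC u0c w = 0.
Proof.
have [v v0 vperp] := real_perp.
have vF : v *m Fm = 0 by case: hF => _ _ _ _; apply.
have [l [m [a [lL mL ev]]]] := full_dec (map_mx cx v).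
have lm0 : l + m = 0.
  apply: disjL; first exact: addmx_sub_adds.
  have : map_mx cx v *m Fc = 0 by rewrite -map_mxM vF map_mx0.
  by rewrite ev mulmxDl -scalemxAl u0cF scaler0 addr0.
rewrite lm0 add0r in ev.
have a0 : a != 0.
  apply: contraNneq v0 => a0; move: ev; rewrite a0 scale0r => /eqP.
  by rewrite map_mx_eq0.
move=> wL; have := vperp w wL; rewrite ev cprodC_bf bfZl.
by move/eqP; rewrite mulf_eq0 (negbTE a0) /= => /eqP.
Qed.

Lemma dform (l m l' m' : 'rV[C]_N) (a b : C) :
  (l <= L)%MS -> (m <= Lb)%MS -> (l' <= L)%MS -> (m' <= Lb)%MS ->
  cprodC (l + m + a *: u0c) (l' + m' + b *: u0c) =
  cprodC l m' + cprodC m l' + a * b * cprodC u0c u0c.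
Proof.
move=> lL mL lL' mL'.
have sL : forall x : 'rV[C]_N, (x <= L)%MS -> (x <= L + Lb)%MS.
  by move=> x xL; apply: submx_trans xL (addsmxSl _ _).
have sLb : forall x : 'rV[C]_N, (x <= Lb)%MS -> (x <= L + Lb)%MS.
  by move=> x xL; apply: submx_trans xL (addsmxSr _ _).
have sy := bf_sym Bc_sym.
rewrite !cprodC_bf !(bfDl, bfDr, bfZl, bfZr).
rewrite -!cprodC_bf (isoL lL lL') (isoLb mL mL').
rewrite (_ : cprodC l u0c = cprodC u0c l); last by rewrite !cprodC_bf sy.
rewrite (_ : cprodC m u0c = cprodC u0c m); last by rewrite !cprodC_bf sy.
rewrite (u0c_perp (sL _ lL')) (u0c_perp (sLb _ mL')) (u0c_perp (sL _ lL)) (u0c_perp (sLb _ mL)).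
ring.
Qed.


Lemma Fdec (l m : 'rV[C]_N) a : (l <= L)%MS -> (m <= Lb)%MS ->
  (l + m + a *: u0c) *m Fc = 'i%C *: l + (- 'i%C) *: m + 0 *: u0c.
Proof.
by move=> lL mL; rewrite !mulmxDl -scalemxAl u0cF (eL lL) (eLb mL) scaler0 scale0r.
Qed.

Lemma F_skew (u v : 'rV[R]_N) : cprod (u *m Fm) v = - cprod u (v *m Fm).
Proof.
apply: (@complexI R).
rewrite rmorphN.
change (cx (cprod (u *m Fm) v) = - cx (cprod u (v *m Fm))).
rewrite -!cprodC_rc !map_mxM.
have [l [m [a [lL mL ->]]]] := full_dec (map_mx cx u).
have [l' [m' [b [lL' mL' ->]]]] := full_dec (map_mx cx v).
rewrite (Fdec _ lL mL) (Fdec _ lL' mL').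
rewrite (dform _ _ (scalemx_sub _ lL) (scalemx_sub _ mL) lL' mL').
rewrite (dform _ _ lL mL (scalemx_sub _ lL') (scalemx_sub _ mL')).
rewrite !cprodC_bf !(bfZl, bfZr).
ring.
Qed.

Lemma ii : ('i%C * 'i%C : C) = -1.
Proof. by rewrite -expr2 sqr_i. Qed.

Lemma F_sq (u : 'rV[R]_N) : u *m Fm *m Fm = - u + (cprod u u0 / cprod u0 u0) *: u0.
Proof.
apply: (map_mx_inj (f := cx)).
rewrite !map_mxM map_mxD map_mxN map_mxZ.
have cxc : cx (cprod u0 u0) != 0 by rewrite fmorph_eq0.
have ha : forall l m a, (l <= L)%MS -> (m <= Lb)%MS -> map_mx cx u = l + m + a *: u0c ->
   cx (cprod u u0) = a * cx (cprod u0 u0).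
  move=> l m a lL mL eu.
  rewrite -!cprodC_rc eu.
  have e : u0c = 0 + 0 + 1 *: u0c by rewrite !add0r scale1r.
  rewrite [X in cprodC _ X]e.
  rewrite (dform _ _ lL mL (sub0mx _ _) (sub0mx _ _)) !cprodC_bf !bf0r; ring.
have [l [m [a [lL mL eu]]]] := full_dec (map_mx cx u).
rewrite fmorph_div.
change (map_mx cx u *m Fc *m Fc = - map_mx cx u + (cx (cprod u u0) / cx (cprod u0 u0)) *: u0c).
rewrite (ha _ _ _ lL mL eu) mulfK // eu.
rewrite (Fdec _ lL mL) (Fdec _ (scalemx_sub _ lL) (scalemx_sub _ mL)).
rewrite !scalerA mulrNN ii !scaleN1r scale0r addr0.
by rewrite opprD addrNK opprD.
Qed.

End Cplx.

Lemma stab_rows (K : fieldType) m (S F : 'M[K]_m) :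
  (forall v : 'rV_m, (v <= S)%MS -> (v *m F <= S)%MS) -> (S *m F <= S)%MS.
Proof. by move=> h; apply/row_subP => i; rewrite row_mul; apply: h; apply: row_sub. Qed.

Unset Implicit Arguments.
Set Strict Implicit.

Theorem lemma3p2 (R : rcfType) (n : nat) (Em Gend Fm : 'M[R]_(odd_dim n))
  (u0 : 'rV[R]_(odd_dim n)) :
  Bn_gen_almost_pseudo_hermitian Em Gend Fm ->
  u0 *m Fm = 0 ->
  cprod u0 u0 = (-1) ^+ n ->
  (u0 *m Gend = (-1) ^+ n *: u0 /\
   ((odd n -> (u0 <= Em)%MS) /\ (~~ odd n -> in_Eplus Em u0))) /\
  (forall u v : 'rV[R]_(odd_dim n),
     Gform Gend (u *m Fm) (v *m Fm) = Gform Gend u v - cprod u u0 * cprod v u0 /\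
     Gform Gend (u *m Fm) v = - Gform Gend u (v *m Fm)).
Proof.
move=> [hG hF GF] u0F hc.
have c0 : cprod u0 u0 != 0 by rewrite hc signr_eq0.
have u00 : u0 != 0 := u0_neq0 c0.
have FG : forall u : 'rV[R]_(odd_dim n), u *m Fm *m Gend = u *m Gend *m Fm.
  by move=> u; rewrite -!mulmxA GF.
have Fsq := F_sq hF u0F c0.
have Fsk := F_skew hF u0F c0.
set c := cprod u0 u0 in Fsq c0 hc *.
have Em_st : forall v : 'rV[R]_(odd_dim n), (v <= Em)%MS -> (v *m Fm <= Em)%MS.
  by move=> v vE; apply: (G_neg hG); rewrite FG (G_Em hG vE) mulNmx.
have Ep_st : forall v : 'rV[R]_(odd_dim n), (v <= Ep Em)%MS -> (v *m Fm <= Ep Em)%MS.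
  by move=> v vE; apply: (G_pos hG); rewrite FG (G_Ep hG vE).
set k := cprod (u0 *m Gend) u0 / c.
have eG : u0 *m Gend = k *: u0.
  have := Fsq (u0 *m Gend); rewrite -FG u0F !mul0mx => /eqP.
  by rewrite eq_sym addrC subr_eq0 => /eqP.
have kk : k ^+ 2 == 1.
  have := GG hG u0; rewrite eG -scalemxAl eG scalerA => /eqP.
  rewrite -subr_eq0 -{2}(scale1r u0) -scalerBl scaler_eq0 (negbTE u00) orbF.
  by rewrite subr_eq0 expr2.
have main : u0 *m Gend = (-1) ^+ n *: u0 /\
   ((odd n -> (u0 <= Em)%MS) /\ (~~ odd n -> (u0 <= Ep Em)%MS)).
  rewrite -signr_odd.
  move: kk; rewrite sqrf_eq1 => /orP [] /eqP k1.
  - have u0P : (u0 <= Ep Em)%MS by apply: (G_pos hG); rewrite eG k1 scale1r.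
    have ev : ~~ odd (\rank Em).
      apply: (even_rank (F := Fm)); first exact: stab_rows Em_st.
      move=> v vE; rewrite Fsq.
      have -> : cprod v u0 = 0.
        by rewrite cprod_sym; apply: (Ep_perp u0P).
      by rewrite mul0r scale0r addr0.
    case: hG => rE _ _ _ _; rewrite rE in ev.
    by rewrite (negbTE ev) /= expr0 eG k1.
  - have u0E : (u0 <= Em)%MS by apply: (G_neg hG); rewrite eG k1 scaleN1r.
    have ev : ~~ odd (\rank (Ep Em)).
      apply: (even_rank (F := Fm)); first exact: stab_rows Ep_st.
      move=> v vE; rewrite Fsq.
      have -> : cprod v u0 = 0 by apply: (Ep_perp vE).
      by rewrite mul0r scale0r addr0.
    rewrite (rank_Ep hG) /= negbK in ev.
    by rewrite ev /= expr1 eG k1.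
case: main => eG' [hO hE].
split.
  split => //; split => // /hE; exact: Ep_perp.
move=> u v; rewrite /Gform.
split; last by rewrite FG Fsk.
rewrite FG Fsk Fsq.
rewrite /cprod -!/(bf _ _ _) bfDr bfNr bfZr.
have e1 : cprod (u *m Gend) u0 = c * cprod u u0.
  by rewrite (G_sym hG) eG' -hc /cprod -/(bf _ _ _) bfZr.
rewrite -[bf _ (u *m Gend) u0]/(cprod (u *m Gend) u0) e1.
rewrite [cprod u u0]/(bf _ u u0).
move: c0; clearbody c => c0.
rewrite -/(bf (courant_gram R n) u u0).
by field.
Qed.
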